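(* Consider the following game for an adversary $\mathcal{A}=(\mathcal{A}_M,\mathcal{A}_L,\mathcal{A}_R)$ with parameter $n=n(\lambda)$: (1) The challenger samples a uniformly random invertible $U\in\mathbb{F}_2^{n\times n}$, lets $A$ be the span of its first $n/2$ columns, samples $s\leftarrow\mathsf{CS}(A)$ and $t\leftarrow\mathsf{CS}(A^\perp)$ uniformly, and sends $|A_{s,t}\rangle$ to $\mathcal{A}_M$. (2) $\mathcal{A}_M$ may abort (the game outcome is then $\bot$); otherwise it produces a bipartite state on registers $\mathbf{L}\mathbf{R}$, sending $\mathbf{L}$ to $\mathcal{A}_L$ and $\mathbf{R}$ to $\mathcal{A}_R$. (3) The challenger samples $r_L,r_R\leftarrow\mathbb{F}_2^n$ uniformly; $\mathcal{A}_L$ receives $(U,r_L)$ and outputs $b_0^l$, $\mathcal{A}_R$ receives $(U,r_R)$ and outputs $b_1^r$. The adversary wins iff $b_0^l\oplus b_1^r=\langle r_L,s\rangle\oplus\langle r_R,t\rangle$. Then for any adversary $\mathcal{A}$ with $\Pr[\text{outcome}\ne\bot]\ge 1/\mathrm{poly}(\lambda)$, $$\frac{\Pr[\text{outcome}=1]}{\Pr[\text{outcome}\ne\bot]}\le\frac12+\mathrm{negl}(\lambda).$$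
   Context: Coset state: $|A_{s,t}\rangle=\frac{1}{\sqrt{|A|}}\sum_{a\in A}(-1)^{\langle a,t\rangle}|a+s\rangle$. Canonical coset representatives: let $A\le\mathbb{F}_2^n$ be the span of the columns of an invertible $U$ with indices in a set $C$. $\mathsf{Can}_A(s):=Uw$ where $w$ is $U^{-1}s$ with the coordinates indexed by $C$ replaced by zeros; $\mathsf{Can}_{A^\perp}(s'):=U^{-t}w'$ where $w'$ is $U^{t}s'$ with coordinates not indexed by $C$ replaced by zeros; $\mathsf{CS}(A)$ and $\mathsf{CS}(A^\perp)$ are the respective images. Outcome $1/0/\bot$ means win/lose/abort. One may use as known that without the abort option, every adversary wins this game (the XOR version) with probability at most $1/2+\mathrm{negl}(\lambda)$. *)

(* Defs.v *)
From HB Require Import structures.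
From mathcomp Require Import all_boot all_order all_algebra.
From mathcomp Require Import complex reals.
Set Implicit Arguments. Unset Strict Implicit. Unset Printing Implicit Defensive.
Import Order.TTheory GRing.Theory Num.Theory Num.Def.
Local Open Scope ring_scope.

Section Game.
Variable R : realType.
Local Notation C := R[i].

(* An operator on the Hilbert space C^T (T a finite type) is a T x T
   array of complex numbers, indexed by the computational basis. *)
Definition op (T : finType) := T -> T -> C.
Definition idop (T : finType) : op T := fun i j => (i == j)%:R.
Definition subop (T : finType) (M N : op T) : op T := fun i j => M i j - N i j.

Definition psd (T : finType) (M : op T) : Prop :=
  (forall i j, M j i = (M i j)^*) /\
  (forall v : T -> C, 0 <= \sum_i \sum_j (v i)^* * M i j * v j).

(* A two-outcome POVM {E, I - E}: E is the effect of outcome 1 (true). *)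
Definition effect (T : finType) (E : op T) : Prop := psd E /\ psd (subop (@idop T) E).
Definition povm_el (T : finType) (E : op T) (b : bool) : op T :=
  if b then E else subop (@idop T) E.

Definition vec n := 'cV['F_2]_n.
Definition mat n := 'M['F_2]_n.
Definition ip n (x y : vec n) : 'F_2 := (x^T *m y) ord0 ord0.
Definition GL n : {set mat n} := [set U : mat n | U \in unitmx].

(* A = span of the columns of U indexed by C = {0,...,n/2 - 1} *)
Definition inC n (i : 'I_n) : bool := (i < n./2)%N.
Definition subA n (U : mat n) : {set vec n} :=
  [set U *m v | v : vec n & [forall i, ~~ inC i ==> (v i ord0 == 0)]].
Definition CanA n (U : mat n) (s : vec n) : vec n :=
  U *m \col_i (if inC i then 0 else (invmx U *m s) i ord0).
Definition CanAperp n (U : mat n) (s' : vec n) : vec n :=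
  (invmx U)^T *m \col_i (if inC i then (U^T *m s') i ord0 else 0).
Definition CS_A n (U : mat n) : {set vec n} := [set CanA U s | s : vec n].
Definition CS_Aperp n (U : mat n) : {set vec n} := [set CanAperp U s | s : vec n].

Definition sgn (b : 'F_2) : C := if b == 0 then 1 else -1.

Definition coset_state n (U : mat n) (s t : vec n) : vec n -> C :=
  fun x => (sqrtC (#|subA U|%:R))^-1 *
           \sum_(a in subA U) sgn (ip a t) * (x == a + s)%:R.

Definition avg (T : finType) (S : {set T}) (f : T -> C) : C :=
  (#|S|%:R)^-1 * \sum_(x in S) f x.

(* A_M : a trace-non-increasing CP map from C^(F_2^n) to H_L (x) H_R,
   given by Kraus operators kraus k; the missing trace is the abort
   probability.  A_L (resp. A_R), on input (U, r), performs the
   two-outcome measurement with effect effL U r (resp. effR U r). *)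
Record adversary (n : nat) := Adversary {
  TL : finType; TR : finType; KI : finType;
  kraus : KI -> TL -> TR -> vec n -> C;
  effL : mat n -> vec n -> op TL;
  effR : mat n -> vec n -> op TR }.
Arguments kraus {n} a _ _ _ _.
Arguments effL {n} a _ _ _ _.
Arguments effR {n} a _ _ _ _.

Definition KdK n (A : adversary n) : op (vec n) :=
  fun x y => \sum_k \sum_l \sum_r (kraus A k l r x)^* * kraus A k l r y.

Definition valid_adv n (A : adversary n) : Prop :=
  psd (subop (@idop _) (KdK A)) /\
  (forall U r, effect (effL A U r)) /\ (forall U r, effect (effR A U r)).

Definition nonaborting n (A : adversary n) : Prop := KdK A = @idop _.

Definition out_vec n (A : adversary n) (U : mat n) (s t : vec n) k l r : C :=
  \sum_x kraus A k l r x * coset_state U s t x.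

Arguments out_vec {n} A U s t k l r.

(* probability that A_M does not abort, for fixed U, s, t *)
Definition p_cont n (A : adversary n) U s t : C :=
  \sum_k \sum_l \sum_r (out_vec A U s t k l r)^* * out_vec A U s t k l r.

(* probability of not aborting and of outputs (bl, br) *)
Definition p_out n (A : adversary n) U s t rL rR (bl br : bool) : C :=
  \sum_k \sum_l \sum_l' \sum_r \sum_r'
    (out_vec A U s t k l r)^* * povm_el (effL A U rL) bl l l' *
    povm_el (effR A U rR) br r r' * out_vec A U s t k l' r'.

Definition Pr_notbot n (A : adversary n) : C :=
  avg (GL n) (fun U => avg (CS_A U) (fun s => avg (CS_Aperp U) (fun t =>
    p_cont A U s t))).

Definition Pr_win n (A : adversary n) : C :=
  avg (GL n) (fun U => avg (CS_A U) (fun s => avg (CS_Aperp U) (fun t =>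
  avg [set: vec n] (fun rL => avg [set: vec n] (fun rR =>
    \sum_(bl : bool) \sum_(br : bool)
      ((bl (+) br) == (ip rL s + ip rR t != 0))%:R * p_out A U s t rL rR bl br))))).

Definition negligible (f : nat -> C) : Prop :=
  forall c : nat, exists N : nat, forall lam : nat, (N <= lam)%N ->
    `|f lam| <= (lam%:R ^+ c)^-1.

Definition noticeable (f : nat -> C) : Prop :=
  exists c N : nat, forall lam : nat, (N <= lam)%N -> (lam%:R ^+ c)^-1 <= f lam.

(* the known bound for the XOR game without abort option *)
Definition xor_game_bound (n : nat -> nat) : Prop :=
  forall B : forall lam, adversary (n lam),
    (forall lam, valid_adv (B lam) /\ nonaborting (B lam)) ->
    exists nu : nat -> C, negligible nu /\
      forall lam, Pr_win (B lam) <= 2^-1 + nu lam.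

End Game.

(* Main.v *)
Require Import Defs.
From mathcomp Require Import all_boot all_order all_algebra.
From mathcomp Require Import complex reals.
Set Implicit Arguments. Unset Strict Implicit. Unset Printing Implicit Defensive.
From mathcomp Require Import ring.
From Stdlib Require Import FunctionalExtensionality.
Import Order.TTheory GRing.Theory Num.Theory Num.Def.
Local Open Scope ring_scope.

Section Fact.
Variable R : realType.
Local Notation C := R[i].

Lemma sum_T_ord (T : finType) (F : T -> C) :
  \sum_(x : T) F x = \sum_(i < #|T|) F (enum_val i).
Proof.
rewrite (reindex (@enum_val T T)) //=.
by apply: onW_bij; exact: enum_val_bij.
Qed.

Definition facAm (T : finType) (P : op R T) : 'M[C]_#|T| :=
  \matrix_(i, j) P (enum_val i) (enum_val j).
Definition facM (T : finType) (P : op R T) : 'I_#|T| -> T -> C :=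
  fun j x => sqrtC (spectral_diag (facAm P) 0 j) * spectralmx (facAm P) j (enum_rank x).

Lemma facM_spec (T : finType) (P : op R T) : psd P ->
  forall x y, P x y = \sum_j (facM P j x)^* * facM P j y.
Proof.
move=> [Pherm Ppos].
pose k := #|T|.
pose Am : 'M[C]_k := facAm P.
have AmH : (Am ^t*)%sesqui = Am.
  by apply/matrixP => i j; rewrite !mxE Pherm conjCK.
have Anorm : Am \is normalmx by rewrite qualifE AmH.
have /orthomx_spectralP Aeq := Anorm.
set S := spectralmx Am in Aeq.
set d := spectral_diag Am in Aeq.
have Sun : S \is unitarymx by exact: spectral_unitarymx.
rewrite invmx_unitary // in Aeq.
have SSt : S *m (S ^t*)%sesqui = 1%:M by exact/unitarymxP.
have dE : S *m Am *m (S ^t*)%sesqui = diag_mx d.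
  by rewrite Aeq !mulmxA SSt mul1mx -mulmxA SSt mulmx1.
have dge0 : forall a, 0 <= d 0 a.
  move=> a.
  have := congr1 (fun M : 'M[C]_k => M a a) dE.
  rewrite /= [in X in _ = X]mxE eqxx mulr1n => <-.
  rewrite mxE.
  have -> : \sum_j (S *m Am) a j * (S ^t*)%sesqui j a =
     \sum_(i < k) \sum_(j < k) S a i * Am i j * (S a j)^*.
    rewrite exchange_big /=; apply: eq_bigr => j _.
    by rewrite !mxE big_distrl.
  have := Ppos (fun x => (S a (enum_rank x))^*).
  rewrite sum_T_ord => H; apply: le_trans H _; rewrite le_eqVlt; apply/orP; left; apply/eqP.
  rewrite /k.
  apply: eq_bigr => i _; rewrite sum_T_ord; apply: eq_bigr => j _.
  by rewrite conjCK !enum_valK !mxE.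
move=> x y.
rewrite /facM -/Am -/S -/d.
have -> : P x y = Am (enum_rank x) (enum_rank y) by rewrite mxE !enum_rankK.
rewrite Aeq mxE; apply: eq_bigr => j _.
rewrite mul_mx_diag !mxE rmorphM /= (@geC0_conj _ (sqrtC (d 0 j))) ?sqrtC_ge0 //.
by rewrite mulrACA -expr2 sqrtCK mulrA (mulrC (d 0 j)).
Qed.


Lemma big_opt (V : nmodType) (T : finType) (F : option T -> V) :
  \sum_i F i = F None + \sum_a F (Some a).
Proof.
rewrite (bigD1 None) //=; congr (_ + _).
rewrite (reindex_omap Some id) /=; last by case.
by apply: eq_bigl => a; rewrite eqxx.
Qed.

Variable n : nat.
Variable A : adversary R n.

Definition PA : op R (vec n) := subop (@idop R _) (KdK A).
Definition Jt := 'I_#|vec n|.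
Definition Mf : Jt -> vec n -> C := facM PA.

Definition krB (ki : (KI A + Jt)%type) (l : option (TL A)) (r : option (TR A)) (x : vec n) : C :=
  match ki, l, r with
  | inl k, Some a, Some b => @kraus R n A k a b x
  | inr j, None, None => Mf j x
  | _, _, _ => 0 end.

Definition blk (T : finType) (E : op R T) (c : C) : op R (option T) := fun i j =>
  match i, j with Some a, Some b => E a b | None, None => c | _, _ => 0 end.

Definition B : adversary R n := @Adversary R n (option (TL A)) (option (TR A)) (KI A + Jt)%type krB
   (fun U r => blk (@effL R n A U r) 2^-1) (fun U r => blk (@effR R n A U r) 2^-1).

Lemma KdK_B : valid_adv A -> forall x y, KdK B x y = @idop R _ x y.
Proof.
move=> [HP _] x y.
rewrite /KdK /= big_sumType /=.
have -> : \sum_(k : KI A) \sum_(l : option (TL A)) \sum_(r : option (TR A))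
     (krB (inl k) l r x)^* * krB (inl k) l r y = KdK A x y.
  apply: eq_bigr => k _; rewrite big_opt big1; last by case=> *; rewrite /= conjC0 mul0r.
  rewrite add0r; apply: eq_bigr => a _; rewrite big_opt /= conjC0 mul0r add0r //.
have -> : \sum_(j : Jt) \sum_(l : option (TL A)) \sum_(r : option (TR A))
     (krB (inr j) l r x)^* * krB (inr j) l r y = PA x y.
  rewrite /PA (facM_spec HP) -/PA; apply: eq_bigr => j _.
  rewrite big_opt big_opt !big1 ?addr0 //.
    by move=> a _; rewrite big1 // => r _; rewrite /= conjC0 mul0r.
  by move=> a _; rewrite /= conjC0 mul0r.
by rewrite /PA /subop addrC subrK.
Qed.

Lemma psd_ext (T : finType) (M N : op R T) : (forall i j, M i j = N i j) -> psd M -> psd N.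
Proof.
move=> e [h p]; split; first by move=> i j; rewrite -!e.
move=> v; have := p v; congr (0 <= _); apply: eq_bigr => i _; apply: eq_bigr => j _.
by rewrite e.
Qed.

Lemma psd0 (T : finType) : psd (fun _ _ : T => (0 : C)).
Proof.
split; first by move=> *; rewrite conjC0.
by move=> v; rewrite big1 // => i _; rewrite big1 // => j _; rewrite mulr0 mul0r.
Qed.

Lemma blk_psd (T : finType) (E : op R T) (c : C) : psd E -> 0 <= c -> psd (blk E c).
Proof.
move=> [h p] c0; split.
  by case=> [a|] [b|] //=; rewrite ?conjC0 // geC0_conj.
move=> v; rewrite big_opt /= big_opt /= big1; last by move=> *; rewrite mulr0 mul0r.
rewrite addr0; apply: addr_ge0.
  rewrite mulrC mulrA; apply: mulr_ge0 => //.
  exact: mul_conjC_ge0.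
have := p (fun a => v (Some a)); congr (0 <= _); apply: eq_bigr => a _.
by rewrite big_opt /= mulr0 mul0r add0r.
Qed.

Lemma effect_blk (T : finType) (E : op R T) : effect E -> effect (blk E 2^-1).
Proof.
move=> [h1 h2]; split; first by apply: blk_psd => //; rewrite invr_ge0 ler0n.
apply: (@psd_ext _ (blk (subop (@idop R _) E) 2^-1)); last first.
  by apply: blk_psd => //; rewrite invr_ge0 ler0n.
case=> [a|] [b|] //=; rewrite /subop /idop /= ?subr0 //.
by rewrite mulr1n; field.
Qed.

Lemma valid_B : valid_adv A -> valid_adv B /\ nonaborting B.
Proof.
move=> hA; have K := KdK_B hA.
have nab : nonaborting B.
  rewrite /nonaborting; apply: functional_extensionality => x;
  apply: functional_extensionality => y; exact: K.
split=> //; split.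
  apply: (@psd_ext _ (fun _ _ => 0)); last exact: psd0.
  by move=> i j; rewrite /subop K subrr.
case: hA => _ [hL hR]; split=> U r /=; exact: effect_blk.
Qed.

Lemma opt_zero (T : finType) (F : option T -> C) : F None = 0 -> \sum_i F i = \sum_a F (Some a).
Proof. by move=> h; rewrite big_opt h add0r. Qed.

Lemma opt_only (T : finType) (F : option T -> C) : (forall a, F (Some a) = 0) -> \sum_i F i = F None.
Proof. by move=> h; rewrite big_opt big1 ?addr0. Qed.

Lemma povm_blk_Some (T : finType) (E : op R T) c b a a' :
  povm_el (blk E c) b (Some a) (Some a') = povm_el E b a a'.
Proof. by case: b. Qed.

Lemma povm_blk_None (T : finType) (E : op R T) b :
  povm_el (blk E 2^-1) b None None = 2^-1.
Proof. by case: b => //=; rewrite /subop /idop /= mulr1n; field. Qed.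

Definition wv U s t (j : Jt) : C := \sum_x Mf j x * coset_state R U s t x.
Definition Qf U s t : C := \sum_j (wv U s t j)^* * wv U s t j.

Lemma ovB_l U s t k r : @out_vec R n B U s t (inl k) None r = 0.
Proof. by rewrite /out_vec big1 // => x _; rewrite /= mul0r. Qed.
Lemma ovB_r U s t k l : @out_vec R n B U s t (inl k) l None = 0.
Proof. by rewrite /out_vec big1 // => x _; case: l => *; rewrite /= mul0r. Qed.
Lemma ovB_jl U s t j a r : @out_vec R n B U s t (inr j) (Some a) r = 0.
Proof. by rewrite /out_vec big1 // => x _; rewrite /= mul0r. Qed.
Lemma ovB_jr U s t j l b : @out_vec R n B U s t (inr j) l (Some b) = 0.
Proof. by rewrite /out_vec big1 // => x _; case: l => *; rewrite /= mul0r. Qed.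

Lemma p_out_B U s t rL rR bl br :
  p_out B U s t rL rR bl br = p_out A U s t rL rR bl br + 4^-1 * Qf U s t.
Proof.
rewrite /p_out /= big_sumType /=; congr (_ + _).
  apply: eq_bigr => k _.
  rewrite opt_zero; last first.
    by rewrite big1 // => l' _; rewrite big1 // => r _; rewrite big1 // => r' _;
       rewrite ovB_l conjC0 !mul0r.
  apply: eq_bigr => a _.
  rewrite opt_zero; last first.
    by rewrite big1 // => r _; rewrite big1 // => r' _; rewrite ovB_l mulr0.
  apply: eq_bigr => a' _.
  rewrite opt_zero; last first.
    by rewrite big1 // => r' _; rewrite ovB_r conjC0 !mul0r.
  apply: eq_bigr => b _.
  rewrite opt_zero; last by rewrite ovB_r mulr0.
  apply: eq_bigr => b' _.
  by rewrite !povm_blk_Some.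
rewrite /Qf mulr_sumr; apply: eq_bigr => j _.
rewrite opt_only; last first.
  by move=> a; rewrite big1 // => l' _; rewrite big1 // => r _; rewrite big1 // => r' _;
     rewrite ovB_jl conjC0 !mul0r.
rewrite opt_only; last first.
  by move=> a; rewrite big1 // => r _; rewrite big1 // => r' _; rewrite ovB_jl mulr0.
rewrite opt_only; last first.
  by move=> b; rewrite big1 // => r' _; rewrite ovB_jr conjC0 !mul0r.
rewrite opt_only; last by move=> b; rewrite ovB_jr mulr0.
rewrite !povm_blk_None.
have -> : @out_vec R n B U s t (inr j) None None = wv U s t j by [].
by field.
Qed.

Lemma win_B U s t rL rR :
  \sum_(bl : bool) \sum_(br : bool)
      ((bl (+) br) == (ip rL s + ip rR t != 0))%:R * p_out B U s t rL rR bl br =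
  \sum_(bl : bool) \sum_(br : bool)
      ((bl (+) br) == (ip rL s + ip rR t != 0))%:R * p_out A U s t rL rR bl br
  + 2^-1 * Qf U s t.
Proof.
rewrite !big_bool /= !p_out_B.
by case: (ip rL s + ip rR t != 0) => /=; field.
Qed.

Lemma L1 (I : finType) (F : I -> vec n -> C) (psi : vec n -> C) :
  \sum_i (\sum_x F i x * psi x)^* * (\sum_y F i y * psi y) =
  \sum_x \sum_y (psi x)^* * (\sum_i (F i x)^* * F i y) * psi y.
Proof.
transitivity (\sum_i \sum_x \sum_y (psi x)^* * ((F i x)^* * F i y) * psi y).
  apply: eq_bigr => i _.
  rewrite rmorph_sum mulr_suml; apply: eq_bigr => x _.
  rewrite mulr_sumr; apply: eq_bigr => y _.
  rewrite rmorphM /=; ring.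
rewrite exchange_big /=; apply: eq_bigr => x _.
rewrite exchange_big /=; apply: eq_bigr => y _.
by rewrite mulr_sumr mulr_suml.
Qed.

Lemma L2 (I : finType) (H : I -> vec n -> vec n -> C) (psi : vec n -> C) :
  \sum_i \sum_x \sum_y (psi x)^* * H i x y * psi y =
  \sum_x \sum_y (psi x)^* * (\sum_i H i x y) * psi y.
Proof.
rewrite exchange_big /=; apply: eq_bigr => x _.
rewrite exchange_big /=; apply: eq_bigr => y _.
by rewrite mulr_sumr mulr_suml.
Qed.

Lemma p_cont_E U s t : p_cont A U s t =
  \sum_x \sum_y (coset_state R U s t x)^* * KdK A x y * coset_state R U s t y.
Proof.
rewrite /p_cont /KdK -L2; apply: eq_bigr => k _.
rewrite -L2; apply: eq_bigr => l _.
by rewrite /out_vec L1.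
Qed.

Lemma Qf_E U s t : valid_adv A -> Qf U s t =
  \sum_x (coset_state R U s t x)^* * coset_state R U s t x - p_cont A U s t.
Proof.
move=> [HP _].
have hP : forall x y, \sum_(j : Jt) (Mf j x)^* * Mf j y = PA x y.
  by move=> x y; symmetry; apply: facM_spec.
rewrite p_cont_E /Qf /wv L1.
apply/eqP; rewrite eq_sym subr_eq -big_split; apply/eqP; apply: eq_bigr => x _.
rewrite (eq_bigr (fun y => (coset_state R U s t x)^* * PA x y * coset_state R U s t y)); last first.
  by move=> y _; congr (_ * _ * _); apply: hP.
rewrite -big_split (bigD1 x) // big1.
  rewrite /PA /subop /idop eqxx /=; ring.
move=> y /negbTE ne; rewrite /PA /subop /idop eq_sym ne.
rewrite /=; ring.
Qed.

Lemma conj_sgn b : (sgn R b)^* = sgn R b.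
Proof. rewrite /sgn; case: (b == 0); first exact: rmorph1.
by rewrite rmorphN rmorph1. Qed.

Lemma sgn_sq b : sgn R b * sgn R b = 1.
Proof. by rewrite /sgn; case: (b == 0); rewrite ?mulrNN mulr1. Qed.

Lemma norm_coset (U : mat n) (s t : vec n) :
  \sum_x (coset_state R U s t x)^* * coset_state R U s t x = 1.
Proof.
set N : C := #|subA U|%:R.
set c : C := (sqrtC N)^-1.
set g := fun a : vec n => sgn R (ip a t).
set Sx := fun x : vec n => \sum_(a in subA U) g a * (x == a + s)%:R.
have cge0 : 0 <= c by rewrite invr_ge0 sqrtC_ge0 ler0n.
have psiE : forall x, coset_state R U s t x = c * Sx x by [].
have cpsiE : forall x, (coset_state R U s t x)^* = c * Sx x.
  move=> x; rewrite psiE rmorphM /= geC0_conj // rmorph_sum; congr (_ * _).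
  by apply: eq_bigr => a _; rewrite rmorphM /= conj_sgn rmorph_nat.
transitivity (c * c * \sum_x Sx x * Sx x).
  rewrite mulr_sumr; apply: eq_bigr => x _; rewrite cpsiE psiE; ring.
have -> : \sum_x Sx x * Sx x = \sum_(a in subA U) \sum_(b in subA U) g a * g b * (a == b)%:R.
  transitivity (\sum_x \sum_(a in subA U) \sum_(b in subA U) g a * g b * ((x == a + s)%:R * (x == b + s)%:R)).
    apply: eq_bigr => x _; rewrite /Sx mulr_suml; apply: eq_bigr => a _.
    rewrite mulr_sumr; apply: eq_bigr => b _; ring.
  rewrite exchange_big; apply: eq_bigr => a _.
  rewrite exchange_big; apply: eq_bigr => b _.
  rewrite -mulr_sumr; apply: (congr1 (fun z => g a * g b * z)).
  rewrite (bigD1 (a + s)) // big1 ?addr0; last first.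
    by move=> x /negbTE ne; rewrite ne mul0r.
  rewrite eqxx mulr1n mul1r.
  rewrite /= addr0.
  by rewrite (inj_eq (addIr s)).
have -> : \sum_(a in subA U) \sum_(b in subA U) g a * g b * (a == b)%:R = N.
  rewrite /N -sum1_card natr_sum; apply: eq_bigr => a aA.
  rewrite (bigD1 a) // big1 ?addr0; last first.
    by move=> b /andP [_ /negbTE ne]; rewrite eq_sym ne mulr0.
  rewrite /= addr0 eqxx mulr1n mulr1.
  by rewrite sgn_sq.
have N0 : N != 0.
  rewrite /N pnatr_eq0 -lt0n; apply/card_gt0P; exists 0.
  apply/imsetP; exists 0; last by rewrite mulmx0.
  by rewrite inE; apply/forallP => i; rewrite mxE eqxx implybT.
rewrite /c -invrM ?unitfE ?sqrtC_eq0 // -expr2 sqrtCK mulVf //.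
Qed.

Lemma avg_ext (T : finType) (S : {set T}) (f g : T -> C) :
  (forall x, f x = g x) -> avg S f = avg S g.
Proof. by move=> e; rewrite /avg; congr (_ * _); apply: eq_bigr => x _. Qed.

Lemma avgD (T : finType) (S : {set T}) (f g : T -> C) :
  avg S (fun x => f x + g x) = avg S f + avg S g.
Proof. by rewrite /avg big_split mulrDr. Qed.

Lemma avg_const (T : finType) (S : {set T}) (x0 : T) (c : C) :
  x0 \in S -> avg S (fun _ => c) = c.
Proof.
move=> x0S; rewrite /avg sumr_const -[c *+ _]mulr_natl mulrA mulVf ?mul1r //.
by rewrite pnatr_eq0 -lt0n; apply/card_gt0P; exists x0.
Qed.

Lemma avg_aff (T : finType) (S : {set T}) (x0 : T) (k : C) (f : T -> C) :
  x0 \in S -> avg S (fun x => k * (1 - f x)) = k * (1 - avg S f).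
Proof.
move=> x0S.
have -> : avg S (fun x => k * (1 - f x)) = avg S (fun x => k + (- k) * f x).
  by apply: avg_ext => x; ring.
rewrite avgD (avg_const _ x0S) /avg.
have -> : \sum_(x in S) - k * f x = - k * \sum_(x in S) f x by rewrite mulr_sumr.
ring.
Qed.

Lemma GL_in : (1%:M : mat n) \in GL n.
Proof. by rewrite inE unitmx1. Qed.

Lemma CS_A_in (U : mat n) : CanA U 0 \in CS_A U.
Proof. by apply/imsetP; exists 0. Qed.

Lemma CS_Aperp_in (U : mat n) : CanAperp U 0 \in CS_Aperp U.
Proof. by apply/imsetP; exists 0. Qed.

Lemma setT_in : (0 : vec n) \in [set: vec n].
Proof. by rewrite inE. Qed.

Lemma Pr_win_B : valid_adv A ->
  Pr_win B = Pr_win A + 2^-1 * (1 - Pr_notbot A).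
Proof.
move=> hA.
rewrite /Pr_win /Pr_notbot.
transitivity (avg (GL n) (fun U => avg (CS_A U) (fun s => avg (CS_Aperp U) (fun t =>
  avg [set: vec n] (fun rL => avg [set: vec n] (fun rR =>
    \sum_(bl : bool) \sum_(br : bool)
      ((bl (+) br) == (ip rL s + ip rR t != 0))%:R * p_out A U s t rL rR bl br))
  + 2^-1 * (1 - p_cont A U s t))))).
  apply: avg_ext => U; apply: avg_ext => s; apply: avg_ext => t.
  rewrite -(avg_const (2^-1 * (1 - p_cont A U s t)) setT_in) -avgD.
  apply: avg_ext => rL.
  rewrite -(avg_const (2^-1 * (1 - p_cont A U s t)) setT_in) -avgD.
  apply: avg_ext => rR.
  by rewrite win_B (Qf_E _ _ _ hA) norm_coset.
rewrite -(avg_aff _ _ GL_in) -avgD; apply: avg_ext => U.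
rewrite -(avg_aff _ _ (CS_A_in U)) -avgD; apply: avg_ext => s.
by rewrite -(avg_aff _ _ (CS_Aperp_in U)) -avgD.
Qed.
End Fact.

Unset Implicit Arguments.

Theorem mainTheorem3 (R : realType) (n : nat -> nat)
  (known_xor_bound : xor_game_bound R n)
  (A : forall lam, adversary R (n lam))
  (hA : forall lam, valid_adv (A lam))
  (hnotbot : noticeable (fun lam => Pr_notbot (A lam))) :
  exists nu : nat -> R[i], negligible nu /\ 
    forall lam, Pr_win (A lam) / Pr_notbot (A lam) <= 2^-1 + nu lam.
Proof.
have [nu [negnu hnu]] := known_xor_bound (fun lam => B (A lam)) (fun lam => valid_B (hA lam)).
have hwin : forall lam, Pr_win (A lam) <= Pr_notbot (A lam) / 2 + nu lam.
  move=> lam; have := hnu lam; rewrite (Pr_win_B (hA lam)).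
  set w := Pr_win (A lam); set p := Pr_notbot (A lam); set v := nu lam => h.
  have -> : p / 2 + v = (2^-1 + v) - 2^-1 * (1 - p) by field.
  by rewrite lerBrDr.
case: hnotbot => c [N hN].
pose nu' := fun lam => if (N.+1 <= lam)%N then nu lam / Pr_notbot (A lam)
                       else Pr_win (A lam) / Pr_notbot (A lam) - 2^-1.
have ppos : forall lam, (N.+1 <= lam)%N -> 0 < Pr_notbot (A lam).
  move=> lam hl; apply: (lt_le_trans _ (hN lam (ltnW hl))).
  by rewrite invr_gt0 exprn_gt0 // ltr0n; apply: leq_trans hl.
exists nu'; split; last first.
  move=> lam; rewrite /nu'; case: ifP => hl; last by rewrite addrC subrK.
  have pp := ppos lam hl.
  set w := Pr_win (A lam); set p := Pr_notbot (A lam).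
  have -> : 2^-1 + nu lam / p = (p / 2 + nu lam) / p by field; rewrite lt0r_neq0.
  by rewrite ler_pM2r ?invr_gt0 //; apply: hwin.
move=> d; have [M0 hM0] := negnu (d + c)%N.
exists (maxn M0 N.+1) => lam; rewrite geq_max => /andP [h0 h1].
rewrite /nu' h1.
have pp := ppos lam h1.
have lpos : 0 < (lam%:R : R[i]) by rewrite ltr0n; apply: leq_trans h1.
have hp : (Pr_notbot (A lam))^-1 <= lam%:R ^+ c.
  rewrite -[lam%:R ^+ c]invrK lef_pV2 ?posrE ?invr_gt0 ?exprn_gt0 //.
  exact: hN lam (ltnW h1).
rewrite normrM normfV (gtr0_norm pp).
have -> : (lam%:R ^+ d : R[i])^-1 = (lam%:R ^+ (d + c))^-1 * lam%:R ^+ c.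
  have l0 : (lam%:R : R[i]) != 0 by rewrite lt0r_neq0.
  rewrite exprD; field.
  by rewrite !expf_neq0.
apply: ler_pM => //; first by rewrite invr_ge0 ltW.
exact: hM0.
Qed.
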